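(* Let $G$ be a fullerene graph. If $G$ has a perfect star packing, then the number of vertices of $G$ is divisible by $8$.
   Context: A fullerene graph is a finite simple connected (equivalently, $3$-connected) plane cubic graph all of whose faces are pentagons or hexagons. A perfect star packing of a graph $G$ is a spanning subgraph of $G$ every connected component of which is isomorphic to the star $K_{1,3}$. *)

(* Defs.v *)
From mathcomp Require Import all_boot.
Set Implicit Arguments.
Unset Strict Implicit.
Unset Printing Implicit Defensive.

Section Fullerene.
Variable V : finType.

Definition simple_graph (e : rel V) : Prop := symmetric e /\ irreflexive e.

Definition cubic (e : rel V) : Prop := forall v : V, #|[set w | e v w]| = 3.

Definition connected_graph (e : rel V) : Prop := forall u v : V, connect e u v.

(* Rotation system (combinatorial embedding): rot v is a cyclic permutation
   of the neighbourhood of v. *)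
Definition rotation_system (e : rel V) (rot : V -> V -> V) : Prop :=
  [/\ forall v w, e v w -> e v (rot v w),
      forall v, {in [pred w | e v w] &, injective (rot v)}
    & forall v w w', e v w -> e v w' -> fconnect (rot v) w w'].

Definition darts (e : rel V) : {set V * V} := [set p | e p.1 p.2].

(* Face-traversal permutation on darts: arriving at v from u, leave along
   the successor of u in the rotation at v. *)
Definition face_step (rot : V -> V -> V) (p : V * V) : V * V :=
  (p.2, rot p.2 p.1).

Definition face_of (rot : V -> V -> V) (p : V * V) : {set V * V} :=
  [set q | fconnect (face_step rot) p q].

Definition faces (e : rel V) (rot : V -> V -> V) : {set {set V * V}} :=
  [set face_of rot p | p in darts e].

(* Euler's formula V - E + F = 2 (with E = #darts / 2): the connected
   rotation system has genus 0, i.e. it is a plane embedding. *)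
Definition euler_genus0 (e : rel V) (rot : V -> V -> V) : Prop :=
  (2 * #|V| + 2 * #|faces e rot| = #|darts e| + 4)%N.

Definition faces_5_or_6 (e : rel V) (rot : V -> V -> V) : Prop :=
  forall p, p \in darts e -> #|face_of rot p| \in [:: 5; 6]%N.

Definition fullerene (e : rel V) : Prop :=
  [/\ simple_graph e, cubic e, connected_graph e
    & exists rot : V -> V -> V,
        [/\ rotation_system e rot, euler_genus0 e rot & faces_5_or_6 e rot]].

Definition is_K13 (h : rel V) (C : {set V}) : Prop :=
  exists c x1 x2 x3 : V,
    [/\ uniq [:: c; x1; x2; x3],
        C = [set c; x1; x2; x3]
      & forall u w, u \in C -> w \in C ->
          (h u w <-> ((u == c) && (w \in [set x1; x2; x3]))
                     || ((w == c) && (u \in [set x1; x2; x3])))].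

Definition perfect_star_packing (e : rel V) : Prop :=
  exists h : rel V,
    [/\ symmetric h,
        forall u w, h u w -> e u w
      & forall v, is_K13 h [set w | connect h v w]].

End Fullerene.

(* Main.v *)
Require Import Defs.
From mathcomp Require Import all_boot zify.
Set Implicit Arguments. Unset Strict Implicit. Unset Printing Implicit Defensive.

Lemma inv_even (T : finType) (f : T -> T) (S : {set T}) :
  {in S, forall x, f x \in S} -> {in S, forall x, f (f x) = x} ->
  {in S, forall x, f x != x} -> ~~ odd #|S|.
Proof.
move=> fS ff fn.
have [n leSn] := ubnP #|S|; elim: n S leSn fS ff fn => [|n IH] S //.
move=> leSn fS ff fn.
case: (set_0Vmem S) => [-> | [x xS]]; first by rewrite cards0.
set S' := S :\ x :\ f x.
have fxS : f x \in S :\ x by rewrite !inE fn // fS.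
have cS : #|S| = #|S'|.+2.
  by rewrite (cardsD1 x S) xS (cardsD1 (f x) (S :\ x)) fxS.
have mS' : forall y, y \in S' -> [/\ y \in S, y != x & y != f x].
  by move=> y; rewrite !inE => /and3P [].
rewrite cS /= !negbK.
apply: IH.
- by move: leSn; rewrite cS ltnS => /ltnW.
- move=> y /mS' [yS yx yfx]; rewrite !inE fS // andbT; apply/andP; split.
    by apply: contra yx => /eqP E; rewrite -(ff y yS) E ff.
  by apply: contra yfx => /eqP E; rewrite -(ff y yS) E.
- by move=> y /mS' [yS _ _]; apply: ff.
- by move=> y /mS' [yS _ _]; apply: fn.
Qed.

Section S.
Variable V : finType.
Variables (e h : rel V) (rot : V -> V -> V).
Hypothesis e_sym : symmetric e.
Hypothesis eirr : irreflexive e.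
Hypothesis ecub : cubic e.
Hypothesis rs : rotation_system e rot.

Lemma rot_facts v w : e v w ->
  [/\ e v (rot v w), rot v w != w, rot v (rot v w) != w,
      rot v (rot v (rot v w)) = w &
      forall x, e v x -> [|| x == w, x == rot v w | x == rot v (rot v w)]].
Proof.
move=> evw; case: rs => r1 r2 r3.
set S := [pred x | e v x].
have fin : {homo rot v : x / x \in S} by move=> x; rewrite !inE; apply: r1.
have itS : forall n, iter n (rot v) w \in S.
  by elim=> [|n IH] //=; apply: fin.
have eqS : fconnect (rot v) w =i S.
  move=> x; apply/idP/idP => [Hx|Hx]; last by apply: r3.
  by rewrite -(iter_findex Hx).
have ord3 : order (rot v) w = 3.
  rewrite /order (eq_card eqS) -(ecub v); apply: eq_card => x; by rewrite !inE.
have io := iter_order_in fin (r2 v) evw; rewrite ord3 /= in io.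
have fi := @findex_iter _ (rot v) w; rewrite ord3 in fi.
have f0 := fi 0 isT; rewrite /= in f0.
have n1 : rot v w != w.
  apply/eqP=> E; have := fi 1 isT; by rewrite /= E f0.
have n2 : rot v (rot v w) != w.
  apply/eqP=> E; have := fi 2 isT; by rewrite /= E f0.
split => //; first by apply: r1.
move=> x ex; have : fconnect (rot v) w x by apply: r3.
move=> /iter_findex <-; have := findex_max (r3 _ _ _ evw ex); rewrite ord3.
by case: (findex _ _ _) => [|[|[|]]] //= _; rewrite eqxx ?orbT.
Qed.
Hypothesis hsym : symmetric h.
Hypothesis hsub : forall u w, h u w -> e u w.
Hypothesis hK : forall v, is_K13 h [set w | connect h v w].

Definition hn u := [set w | h u w].

Lemma star u : exists c x1 x2 x3, [/\ uniq [:: c; x1; x2; x3],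
  u \in [set c; x1; x2; x3], hn c = [set x1; x2; x3] &
  forall x, x \in [set x1; x2; x3] -> hn x = [set c]].
Proof.
have [c [x1 [x2 [x3 [U EC H]]]]] := hK u.
exists c, x1, x2, x3.
have uC : u \in [set w | connect h u w] by rewrite inE connect0.
have cl : forall y w, y \in [set w | connect h u w] -> h y w ->
   w \in [set w | connect h u w].
  move=> y w; rewrite !inE => Hy Hyw; apply: connect_trans Hy _; exact: connect1.
have hnE : forall y, y \in [set c; x1; x2; x3] -> hn y =
   [set w | ((y == c) && (w \in [set x1; x2; x3])) || ((w == c) && (y \in [set x1; x2; x3]))].
  move=> y yC; apply/setP => w; rewrite [in LHS]inE [in RHS]inE.
  have yC' : y \in [set w | connect h u w] by rewrite EC.
  case hyw: (h y w).
    have wC : w \in [set w | connect h u w] by apply: (cl y).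
    by apply/esym; apply/(H y w).
  apply/esym/negbTE/negP => Hw.
  have wC : w \in [set w | connect h u w].
    rewrite EC !inE -!orbA; case/orP: Hw => /andP [H1 H2]; last by rewrite H1.
    by move: H2; rewrite !inE -!orbA => ->; rewrite orbT.
  by move/(H y w yC' wC): Hw; rewrite hyw.
have U0 := U; move: U0; rewrite /= !inE !negb_or => /and4P [/and3P [c1 c2 c3] /andP [d1 d2] d3 _].
split => //.
- by rewrite c1 c2 c3 d1 d2 d3.
- by move: uC; rewrite EC !inE.
- rewrite hnE ?inE ?eqxx //; apply/setP => w; rewrite !inE /=. by rewrite (negbTE c1) (negbTE c2) (negbTE c3) andbF orbF.
move=> x xX; rewrite hnE; last by move: xX; rewrite !inE -!orbA => ->; rewrite orbT.
have xc : (x == c) = false.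
  move: xX; rewrite !inE -!orbA; case/or3P => /eqP ->; apply/negbTE; by rewrite eq_sym.
apply/setP => w; rewrite !inE xc /=. by move: xX; rewrite !inE => ->; rewrite andbT.
Qed.

Definition center u := #|hn u| == 3.
Definition cen u := odflt u [pick w | h u w].

Lemma card3 (c x1 x2 x3 : V) : uniq [:: c; x1; x2; x3] -> #|[set x1; x2; x3]| = 3.
Proof.
move=> U; have U' : uniq [:: x1; x2; x3] by case/andP: U.
rewrite -[3]/(size [:: x1; x2; x3]) -(card_uniqP U'); apply: eq_card => w; by rewrite !inE -!orbA.
Qed.

Lemma S1 u : ~~ center u -> exists c, hn u = [set c] /\ center c.
Proof.
have [c [x1 [x2 [x3 [U uC Hc Hx]]]]] := star u.
move: uC; rewrite !inE -!orbA; case/orP => [/eqP ->|uX].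
  by rewrite /center Hc (card3 U) eqxx.
move=> _; exists c; split; first by apply: Hx; rewrite !inE -!orbA.
by rewrite /center Hc (card3 U).
Qed.

Lemma S2 c w : center c -> h c w -> hn w = [set c].
Proof.
have [c0 [x1 [x2 [x3 [U uC Hc Hx]]]]] := star c.
move: uC; rewrite !inE -!orbA; case/orP => [/eqP ->|uX].
  move=> _ hw; apply: Hx; by rewrite -Hc inE.
rewrite /center Hx; first by rewrite cards1.
by rewrite !inE -!orbA.
Qed.

Lemma leaf_cen u : ~~ center u -> [/\ center (cen u), h u (cen u) & hn u = [set cen u]].
Proof.
move=> /S1 [c [Hu Hc]].
have huc : h u c by move: (set11 c); rewrite -Hu inE.
have -> : cen u = c.
  rewrite /cen; case: pickP => [w hw|/(_ c)]; last by rewrite huc.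
  by apply/set1P; rewrite -Hu inE.
by [].
Qed.

Lemma center_e c w : center c -> e c w = h c w.
Proof.
move=> Cc; have : hn c == [set w | e c w].
  rewrite eqEcard (eqP Cc) (ecub c) leqnn andbT.
  by apply/subsetP => x; rewrite !inE; apply: hsub.
move/eqP/setP/(_ w); by rewrite !inE.
Qed.

Lemma center_nbr c w : center c -> e c w -> ~~ center w /\ cen w = c.
Proof.
move=> Cc; rewrite center_e // => hcw.
have Hw := S2 Cc hcw.
have nw : ~~ center w by rewrite /center Hw cards1.
split => //; have [_ _ E] := leaf_cen nw.
by apply/esym/set1_inj; rewrite -E.
Qed.

Lemma leaf_nbr v w : ~~ center v -> e v w -> w != cen v -> ~~ center w.
Proof.
move=> nv evw; apply: contra => Cw.
have [_ <-] := center_nbr Cw (etrans (e_sym w v) evw).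
by [].
Qed.

Hypothesis f56 : faces_5_or_6 e rot.

Definition alpha v := rot v (cen v).
Definition X := [set v | rot (alpha v) v == cen (alpha v)].
Definition Lv := [set v | ~~ center v].
Definition A := Lv :&: X.
Definition B := Lv :\: X.
Definition P v := rot (cen (alpha v)) (alpha v).

Lemma e_cen v : ~~ center v -> e v (cen v).
Proof. by case/leaf_cen => _ /hsub. Qed.

Lemma alpha_facts v : ~~ center v ->
  [/\ e v (alpha v), alpha v != cen v & ~~ center (alpha v)].
Proof.
move=> nv; have ec := e_cen nv.
have [r1 r2 _ _ _] := rot_facts ec.
by split => //; apply: leaf_nbr r1 r2.
Qed.

Lemma B_inv v : v \in B -> [/\ alpha v \in B, alpha (alpha v) = v & alpha v != v].
Proof.
rewrite /B /Lv /X !inE => /andP [nX nv].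
have [ev ne ny] := alpha_facts nv.
set y := alpha v in ev ne ny nX *.
have [_ _ _ _ nb] := rot_facts (e_cen ny).
have ey : e y v by rewrite e_sym.
have vc : (v == cen y) = false.
  apply/negbTE; apply: contraNneq nv => ->; by case: (leaf_cen ny).
have ay : alpha y = v.
  have := nb v ey; rewrite vc /=; case/orP => /eqP E //.
  have [_ _ _ r3 _] := rot_facts (e_cen ny).
  by move: nX; rewrite E r3 eqxx.
have [_ _ r2 _ _] := rot_facts (e_cen nv).
split => //; last by apply: contraTneq ev => ->; rewrite eirr.
by rewrite ny andbT ay.
Qed.

Lemma darts_cl : {homo face_step rot : p / p \in darts e}.
Proof.
case=> u v; rewrite /darts !inE /= => euv.
have [r1 _ _ _ _] := rot_facts (etrans (e_sym v u) euv); exact r1.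
Qed.

Lemma darts_inj : {in darts e &, injective (face_step rot)}.
Proof.
case=> u v [u' v']; rewrite /darts !inE /= => euv euv' [E1 E2].
subst v'; congr pair; case: rs => _ r2 _; apply: (r2 v) => //.
- by rewrite inE e_sym.
- by rewrite inE e_sym.
Qed.

Lemma face_order p : p \in darts e ->
  [/\ order (face_step rot) p = 5 \/ order (face_step rot) p = 6,
      iter (order (face_step rot) p) (face_step rot) p = p &
      iter 3 (face_step rot) p != p].
Proof.
move=> pd.
have o56 : order (face_step rot) p \in [:: 5; 6].
  have -> : order (face_step rot) p = #|face_of rot p|.
    rewrite /order /face_of; apply: eq_card => q. by rewrite in_set.
  exact: f56.
have io := iter_order_in darts_cl darts_inj pd.
split => //; first by move: o56; rewrite !inE => /orP [] /eqP ->; [left|right].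
apply/eqP => E.
have : findex (face_step rot) p (iter 3 (face_step rot) p) = 3.
  by apply: findex_iter; move: o56; rewrite !inE => /orP [] /eqP ->.
rewrite E; have -> // : findex (face_step rot) p p = 0.
exact: (@findex_iter _ (face_step rot) p 0 (order_gt0 _ _)).
Qed.

Lemma A_inv v : v \in A -> [/\ P v \in A, P (P v) = v & P v != v].
Proof.
rewrite /A /Lv /X !inE => /andP [nv xX].
have [Cc hvc _] := leaf_cen nv.
have [ev ne ny] := alpha_facts nv.
have [Ccy _ _] := leaf_cen ny.
have ecyy : e (cen (alpha v)) (alpha v) by rewrite e_sym; apply: e_cen.
have [r1 _ _ _ _] := rot_facts ecyy.
have [nv' cv'] := center_nbr Ccy r1.
have [ev' ne' na'] := alpha_facts nv'.
have ecv : e (cen v) v by rewrite e_sym; apply: e_cen.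
have d0 : (cen v, v) \in darts e by rewrite /darts inE.
have [o56 io i3] := face_order d0.
have it3 : iter 3 (face_step rot) (cen v, v) = (cen (alpha v), P v).
  by rewrite /= /face_step /= -/(alpha v) (eqP xX).
have it5 : iter 5 (face_step rot) (cen v, v) = (alpha (P v), rot (alpha (P v)) (P v)).
  rewrite -[5]/(2 + 3) iterD it3 /= /face_step /=.
  by rewrite -(cv' : cen (P v) = _) -/(alpha (P v)).
have Pne : P v != v.
  apply: contra i3 => /eqP E; rewrite it3.
  by rewrite -(cv' : cen (P v) = _) E.
case: o56 => o; rewrite o in io.
  move: io; rewrite it5 => -[E _]; by move: na'; rewrite E Cc.
move: io; rewrite -[6]/(1 + 5) iterD it5 /= /face_step /= => -[E1 E2].
have ea'c : e (alpha (P v)) (cen v).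
  have [q1 _ _ _ _] := rot_facts (etrans (e_sym _ _) ev'); by rewrite -E1.
have [_ ca'] := center_nbr Cc (etrans (e_sym _ _) ea'c).
split => //.
  rewrite E1 ca' eqxx andbT; exact: nv'.
by rewrite {1}/P ca' -E1.
Qed.

Definition Cn := [set c | center c].

Lemma count_leaves : #|Lv| = 3 * #|Cn|.
Proof.
rewrite -sum1_card (partition_big cen (fun c => c \in Cn)); last first.
  by move=> v; rewrite /Lv /Cn !inE => /leaf_cen [].
rewrite mulnC -sum_nat_const; apply: eq_bigr => c; rewrite /Cn inE => Cc.
rewrite sum1dep_card -(eqP Cc); apply: eq_card => w; rewrite /Lv !inE.
case hcw: (h c w).
  have [-> ->] := center_nbr Cc (hsub hcw); by rewrite eqxx.
apply/negbTE/negP => /andP [nw /eqP E].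
have [_ hw _] := leaf_cen nw; by move: hw; rewrite E hsym hcw.
Qed.

Lemma main8 : (8 %| #|V|)%N.
Proof.
have c1 := cardsC Cn.
have eL : ~: Cn = Lv by apply/setP => v; rewrite /Lv /Cn !inE.
rewrite eL in c1.
have c2 := cardsID X Lv.
have cl := count_leaves.
have oA : ~~ odd #|A|.
  by apply: (@inv_even _ P) => x /A_inv [].
have oB : ~~ odd #|B|.
  by apply: (@inv_even _ alpha) => x /B_inv [].
move: oA oB; rewrite -!dvdn2 => oA oB.
rewrite /A /B in oA oB.
rewrite -c1. lia.
Qed.
End S.

Theorem mainTheorem1 (V : finType) (e : rel V) :
  fullerene e -> perfect_star_packing e -> (8 %| #|V|)%N.
Proof.
case=> [[es ei] ec _ [rot [rs _ f56]]] [h [hs hsb hk]].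
exact: (@main8 V e h rot es ei ec rs hs hsb hk f56).
Qed.
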